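(* Let $\mathcal{G}$, $\mathcal{S}$, $\mathcal{C}$, $\mu$ be as in the context and let $\mathcal{K}$ be a cover of $\mathcal{C}$. For each dichotomy $(i,b,J,u_1,u_2)$ let $X^{i,u_1,u_2}_{b,J}:=\mu_i^{s}-\mu_i^{s'}$, where $(s,s')$ is an $(i,b,J,u_1,u_2)$-pair contained in $\mathcal{K}$. Then for any state $s\in\mathcal{S}$ and any $i\in[k]$ with $s(i)=b$, and any $s''\in\mathcal{K}$ with $s''(i)=b$, $$\mu_i^s=\mu_i^{s''}+\sum_{J\in I_i}X^{i,s(J),s''(J)}_{b,J}.$$
   Context: $\mathcal{G}=(V,E)$ is an undirected graph on $V=\{v_1,\dots,v_k\}$; $\mathcal{S}=\{s\in\{0,1\}^k:\{v_i:s(i)=1\}$ is independent in $\mathcal{G}\}$. Correlation sets $\mathcal{C}=\{C_1,\dots,C_n\}$ are subsets of $[k]$ of size at most $m$; for each $s\in\mathcal{S}$ and $j\in[n]$ there is $\theta_j^s\ge0$ depending only on $s$ restricted to $C_j$, and $\mu_i^s=\sum_j\theta_j^s\mathbf{1}(i\in C_j)$. Two vertices share a correlation set if they lie together in some set of $\mathcal{C}$. For each $i$, $I_i$ is a partition of the set of indices $j\neq i$ that share a correlation set with $i$ into disjoint subsets such that no two vertices in different subsets share a correlation set. For $J\subseteq[k]$, $s(J)\in\{0,1\}^J$ is $s$ restricted to $J$. For $J\in I_i$, $b\in\{0,1\}$, $u_1,u_2\in\{0,1\}^J$, $(i,b,J,u_1,u_2)$ is a dichotomy if there exist $s,s'\in\mathcal{S}$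 with $s(J)=u_1$, $s'(J)=u_2$, $s(i)=s'(i)=b$, and $s,s'$ agreeing on all coordinates outside $J\cup\{i\}$; such a pair is an $(i,b,J,u_1,u_2)$-pair. A set $\mathcal{K}\subseteq\mathcal{S}$ is a cover of $\mathcal{C}$ if for every dichotomy $(i,b,J,u_1,u_2)$ it contains an $(i,b,J,u_1,u_2)$-pair. *)

(* Defs.v *)
From mathcomp Require Import all_boot all_order all_algebra.
Set Implicit Arguments. Unset Strict Implicit. Unset Printing Implicit Defensive.
Import Order.TTheory GRing.Theory Num.Theory.

Notation state k := {ffun 'I_k -> bool}.

Definition simple_graph (k : nat) (e : rel 'I_k) : Prop :=
  symmetric e /\ irreflexive e.

(* s in S : the vertices with s(i)=1 form an independent set *)
Definition independent (k : nat) (e : rel 'I_k) (s : state k) : bool :=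
  [forall x, forall y, (s x && s y) ==> ~~ e x y].

Definition share (k n : nat) (C : 'I_n -> {set 'I_k}) (x y : 'I_k) : bool :=
  [exists j, (x \in C j) && (y \in C j)].

Definition nbhd (k n : nat) (C : 'I_n -> {set 'I_k}) (i : 'I_k) : {set 'I_k} :=
  [set j | (j != i) && share C i j].

Definition good_partition (k n : nat) (C : 'I_n -> {set 'I_k}) (i : 'I_k)
    (I : {set {set 'I_k}}) : Prop :=
  partition I (nbhd C i) /\
  (forall J1 J2, J1 \in I -> J2 \in I -> J1 != J2 ->
     forall x y, x \in J1 -> y \in J2 -> ~~ share C x y).

(* s(J), encoded as the vector equal to s on J and 0 outside J *)
Definition restr (k : nat) (J : {set 'I_k}) (s : state k) : state k :=
  [ffun x => (x \in J) && s x].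

Definition mu (R : numDomainType) (k n : nat) (C : 'I_n -> {set 'I_k})
    (theta : 'I_n -> state k -> R) (i : 'I_k) (s : state k) : R :=
  (\sum_(j < n | i \in C j) theta j s)%R.

Definition is_pair (k : nat) (e : rel 'I_k) (i : 'I_k) (b : bool)
    (J : {set 'I_k}) (u1 u2 : state k) (p : state k * state k) : bool :=
  [&& independent e p.1, independent e p.2,
      restr J p.1 == u1, restr J p.2 == u2,
      p.1 i == b, p.2 i == b &
      [forall x, (x \notin J) && (x != i) ==> (p.1 x == p.2 x)]].

Definition dichotomy (k : nat) (e : rel 'I_k) (I : 'I_k -> {set {set 'I_k}})
    (i : 'I_k) (b : bool) (J : {set 'I_k}) (u1 u2 : state k) : Prop :=
  J \in I i /\ exists p, is_pair e i b J u1 u2 p.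

Definition is_cover (k : nat) (e : rel 'I_k) (I : 'I_k -> {set {set 'I_k}})
    (K : {set state k}) : Prop :=
  (forall s, s \in K -> independent e s) /\
  (forall i b J u1 u2, dichotomy e I i b J u1 u2 ->
     exists p, [/\ is_pair e i b J u1 u2 p, p.1 \in K & p.2 \in K]).

Definition Xval (R : numDomainType) (k n : nat) (C : 'I_n -> {set 'I_k})
    (theta : 'I_n -> state k -> R)
    (pr : 'I_k -> bool -> {set 'I_k} -> state k -> state k -> state k * state k)
    (i : 'I_k) (b : bool) (J : {set 'I_k}) (u1 u2 : state k) : R :=
  (mu C theta i (pr i b J u1 u2).1 - mu C theta i (pr i b J u1 u2).2)%R.

(* Main.v *)
Require Import Defs.
From mathcomp Require Import all_boot all_order all_algebra.
Import Order.TTheory GRing.Theory Num.Theory.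
Local Open Scope ring_scope.

Lemma indep_sub (k : nat) (e : rel 'I_k) (s t : state k) :
  (forall x, t x -> s x) -> independent e s -> independent e t.
Proof.
move=> hts /forallP hs; apply/forallP => x; apply/forallP => y; apply/implyP.
move=> /andP[tx ty]; have := hs x => /forallP /(_ y) /implyP; apply.
by rewrite !hts.
Qed.

Arguments indep_sub [k e s t].

Lemma in_block (k n : nat) (C : 'I_n -> {set 'I_k}) (i : 'I_k) I x :
  good_partition C i I -> x \in nbhd C i -> exists2 J, J \in I & x \in J.
Proof.
case=> /and3P[/eqP hcov _ _] _ hx.
by move: hx; rewrite -hcov => /bigcupP[J hJ hxJ]; exists J.
Qed.

Arguments in_block [k n C i I x].

Lemma block_sub (k n : nat) (C : 'I_n -> {set 'I_k}) (i : 'I_k) I J :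
  good_partition C i I -> J \in I -> i \notin J.
Proof.
case=> /and3P[/eqP hcov _ _] _ hJ; apply/negP => hiJ.
have : i \in cover I by apply/bigcupP; exists J.
by rewrite hcov inE eqxx.
Qed.

Arguments block_sub [k n C i I J].

Lemma block_fact (k n : nat) (C : 'I_n -> {set 'I_k}) (i : 'I_k) I J j x y :
  good_partition C i I -> J \in I -> i \in C j -> x \in C j -> x != i ->
  y \in C j -> y \in J -> x \in J.
Proof.
move=> hp hJ hi hx hxi hy hyJ.
have hn : x \in nbhd C i.
  by rewrite inE hxi /=; apply/existsP; exists j; rewrite hi hx.
have [J' hJ' hxJ'] := in_block hp hn.
case: (eqVneq J' J) => [<- //| hne].
have := hp.2 J' J hJ' hJ hne x y hxJ' hyJ.
by move/negP; case; apply/existsP; exists j; rewrite hx hy.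
Qed.

Arguments block_fact [k n C i I J j x y].

Theorem theorem7 (R : realFieldType) (k n m : nat) (e : rel 'I_k)
  (C : 'I_n -> {set 'I_k}) (theta : 'I_n -> state k -> R)
  (I : 'I_k -> {set {set 'I_k}}) (K : {set state k})
  (pr : 'I_k -> bool -> {set 'I_k} -> state k -> state k -> state k * state k) :
  simple_graph e ->
  (forall j, (#|C j| <= m)%N) ->
  (forall j s, independent e s -> 0 <= theta j s) ->
  (forall j s s', independent e s -> independent e s' ->
     (forall x, x \in C j -> s x = s' x) -> theta j s = theta j s') ->
  (forall i, good_partition C i (I i)) ->
  is_cover e I K ->
  (forall i b J u1 u2, dichotomy e I i b J u1 u2 ->
     [/\ is_pair e i b J u1 u2 (pr i b J u1 u2),
         (pr i b J u1 u2).1 \in K & (pr i b J u1 u2).2 \in K]) ->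
  forall (s : state k) (i : 'I_k) (b : bool) (s'' : state k),
    independent e s -> s i = b -> s'' \in K -> s'' i = b ->
    mu C theta i s =
      mu C theta i s'' + \sum_(J in I i) Xval C theta pr i b J (restr J s) (restr J s'').
Proof.
move=> _ _ _ hloc hpart hcov hpr s i b s'' hs hsi hK hs''i.
have hs'' : independent e s'' := hcov.1 _ hK.
pose g J j := if C j :&: J != set0 then theta j s - theta j s'' else 0.
have hX : forall J, J \in I i ->
    Xval C theta pr i b J (restr J s) (restr J s'') = \sum_(j < n | i \in C j) g J j.
  move=> J hJ.
  have hiJ := block_sub (hpart i) hJ.
  have hd : dichotomy e I i b J (restr J s) (restr J s'').
    split=> //.
    exists ([ffun x => ((x \in J) || (x == i)) && s x],
            [ffun x => ((x \in J) || (x == i)) && s'' x]).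
    apply/and5P; split.
    - by apply: (indep_sub _ hs) => x; rewrite ffunE => /andP[].
    - by apply: (indep_sub _ hs'') => x; rewrite ffunE => /andP[].
    - by apply/eqP/ffunP => x; rewrite /restr !ffunE /=; case: (x \in J).
    - by apply/eqP/ffunP => x; rewrite /restr !ffunE /=; case: (x \in J).
    apply/and3P; split; first by rewrite /= ffunE eqxx orbT hsi.
      by rewrite /= ffunE eqxx orbT hs''i.
    apply/forallP => x; apply/implyP => /andP[/negbTE hx1 /negbTE hx2].
    by rewrite /= !ffunE hx1 hx2.
  have [hp _ _] := hpr _ _ _ _ _ hd.
  move: hp; set p := pr i b J _ _.
  move=> /and5P[i1 i2 /eqP r1 /eqP r2 /and3P[/eqP e1 /eqP e2 /forallP ag]].
  rewrite /Xval /mu -sumrB; apply: eq_bigr => j hij.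
  rewrite /g; case: (eqVneq (C j :&: J) set0) => [h0 | hne] /=.
  - suff -> : theta j p.1 = theta j p.2 by rewrite subrr.
    apply: hloc => // x hx; case: (eqVneq x i) => [->|hxi]; first by rewrite e1 e2.
    have hxJ : x \notin J.
      by apply/negP => hxJ; move: h0 => /setP /(_ x); rewrite !inE hx hxJ.
    by apply/eqP; have := ag x; rewrite hxJ hxi.
  - have [y /setIP[hy hyJ]] := set0Pn _ hne.
    have key : forall (t u : state k), restr J t = restr J u -> t i = b -> u i = b ->
               forall x, x \in C j -> t x = u x.
      move=> t u r ti ui x hx; case: (eqVneq x i) => [->|hxi]; first by rewrite ti ui.
      have hxJ := block_fact (hpart i) hJ hij hx hxi hy hyJ.
      by move: r => /ffunP /(_ x); rewrite !ffunE hxJ.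
    rewrite (hloc j p.1 s) //; last exact: key.
    by rewrite (hloc j p.2 s'') //; apply: key.
rewrite (eq_bigr _ hX) exchange_big /=.
have hin : forall j, i \in C j -> \sum_(J in I i) g J j = theta j s - theta j s''.
  move=> j hij.
  case: (pickP [pred x | (x \in C j) && (x != i)]) => [x /= /andP[hx hxi] | hnone].
  - have hn : x \in nbhd C i.
      by rewrite inE hxi /=; apply/existsP; exists j; rewrite hij hx.
    have [J0 hJ0 hxJ0] := in_block (hpart i) hn.
    rewrite (bigD1 J0) //= big1 ?addr0.
      rewrite /g; case: (eqVneq (C j :&: J0) set0) => // /setP /(_ x).
      by rewrite !inE hx hxJ0.
    move=> J /andP[hJ hne]; rewrite /g.
    case: (eqVneq (C j :&: J) set0) => //= hne0.
    have [y /setIP[hy hyJ]] := set0Pn _ hne0.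
    have hne' : J0 != J by rewrite eq_sym.
    have := (hpart i).2 J0 J hJ0 hJ hne' x y hxJ0 hyJ.
      by move/negP; case; apply/existsP; exists j; rewrite hx hy.
  - have hci : forall x, x \in C j -> x = i.
      by move=> x hx; move: (hnone x) => /=; rewrite hx /= => /negbT; rewrite negbK => /eqP.
    rewrite (hloc j s s'') // ?subrr; last first.
      by move=> x /hci ->; rewrite hsi hs''i.
    apply: big1 => J hJ; rewrite /g.
    case: (eqVneq (C j :&: J) set0) => //= hne0.
    have [y /setIP[hy hyJ]] := set0Pn _ hne0.
    by move: hyJ; rewrite (hci y hy) (negbTE (block_sub (hpart i) hJ)).
rewrite (eq_bigr _ hin) sumrB /mu.
by rewrite addrC subrK.
Qed.
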